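(* Let $(T,[\cdot,\cdot],[\cdot,\cdot,\cdot],\alpha)$ be a Hom-Lie-Yamaguti algebra and $(\rho,D,\theta)$ a representation of it on a Hom-vector space $(V,\beta)$. Then every (2,3)-coboundary is a (2,3)-cocycle, i.e. $B^2(T,V)\times B^3(T,V)\subseteq Z^2(T,V)\times Z^3(T,V)$.
   Context: Throughout, vector spaces are over an algebraically closed field $\mathbb{K}$ of characteristic different from 2 and 3. A Hom-vector space is a pair $(V,\beta)$ with $\beta:V\to V$ linear. A Hom-Lie-Yamaguti algebra (HLYA) is a vector space $T$ with a linear map $\alpha:T\to T$, a bilinear map $[\cdot,\cdot]$ and a trilinear map $[\cdot,\cdot,\cdot]$ on $T$ such that for all $x_i,y_i\in T$: (HLY01) $\alpha([x_1,x_2])=[\alpha(x_1),\alpha(x_2)]$; (HLY02) $\alpha([x_1,x_2,x_3])=[\alpha(x_1),\alpha(x_2),\alpha(x_3)]$; (HLY1) $[x_1,x_2]+[x_2,x_1]=0$; (HLY2) $[x_1,x_2,x_3]+[x_2,x_1,x_3]=0$; (HLY3) $\sum_{\mathrm{cyc}(x_1,x_2,x_3)}([[x_1,x_2],\alpha(x_3)]+[x_1,x_2,x_3])=0$; (HLY4) $[[x_1,x_2],\alpha(x_3),\alpha(y_1)]+[[x_2,x_3],\alpha(x_1),\alpha(y_1)]+[[x_3,x_1],\alpha(x_2),\alpha(y_1)]=0$; (HLY5) $[\alpha(x_1),\alpha(x_2),[y_1,y_2]]=[[x_1,x_2,y_1],\alpha^2(y_2)]+[\alpha^2(y_1),[x_1,x_2,y_2]]$;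 (HLY6) $[\alpha^2(x_1),\alpha^2(x_2),[y_1,y_2,y_3]]=[[x_1,x_2,y_1],\alpha^2(y_2),\alpha^2(y_3)]+[\alpha^2(y_1),[x_1,x_2,y_2],\alpha^2(y_3)]+[\alpha^2(y_1),\alpha^2(y_2),[x_1,x_2,y_3]]$. A representation of $(T,\alpha)$ on $(V,\beta)$ is a linear map $\rho:T\to\mathrm{End}(V)$ and bilinear maps $D,\theta:T\times T\to\mathrm{End}(V)$ satisfying, for all $x_i,y_i\in T$: (HR01) $\rho(\alpha(x_1))\circ\beta=\beta\circ\rho(x_1)$; (HR02) $D(\alpha(x_1),\alpha(x_2))\circ\beta=\beta\circ D(x_1,x_2)$; (HR03) $\theta(\alpha(x_1),\alpha(x_2))\circ\beta=\beta\circ\theta(x_1,x_2)$; (HR31) $D(x_1,x_2)-\theta(x_2,x_1)+\theta(x_1,x_2)+\rho([x_1,x_2])\circ\beta-\rho(\alpha(x_1))\rho(x_2)+\rho(\alpha(x_2))\rho(x_1)=0$; (HR41) $D([x_1,x_2],\alpha(x_3))+D([x_2,x_3],\alpha(x_1))+D([x_3,x_1],\alpha(x_2))=0$; (HR42) $\theta([x_1,x_2],\alpha(y_1))\circ\beta=\theta(\alpha(x_1),\alpha(y_1))\rho(x_2)-\theta(\alpha(x_2),\alpha(y_1))\rho(x_1)$; (HR51) $D(\alpha(x_1),\alpha(x_2))\rho(y_2)=\rho(\alpha^2(y_2))D(x_1,x_2)+\rho([x_1,x_2,y_2])\circ\beta^2$; (HR52) $\theta(\alpha(x_1),[y_1,y_2])\circ\beta=\rho(\alpha^2(y_1))\theta(x_1,y_2)-\rho(\alpha^2(y_2))\theta(x_1,y_1)$;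 (HR61) $D(\alpha^2(x_1),\alpha^2(x_2))\theta(y_1,y_2)=\theta(\alpha^2(y_1),\alpha^2(y_2))D(x_1,x_2)+\theta([x_1,x_2,y_1],\alpha^2(y_2))\circ\beta^2+\theta(\alpha^2(y_1),[x_1,x_2,y_2])\circ\beta^2$; (HR62) $\theta(\alpha^2(x_1),[y_1,y_2,y_3])\circ\beta^2=\theta(\alpha^2(y_2),\alpha^2(y_3))\theta(x_1,y_1)-\theta(\alpha^2(y_1),\alpha^2(y_3))\theta(x_1,y_2)+D(\alpha^2(y_1),\alpha^2(y_2))\theta(x_1,y_3)$. $C^2(T,V)$ is the space of bilinear $\nu:T\times T\to V$ with $\nu(x_1,x_2)=-\nu(x_2,x_1)$ and (CC01) $\nu(\alpha(x_1),\alpha(x_2))=\beta(\nu(x_1,x_2))$. $C^3(T,V)$ is the space of trilinear $\omega:T^3\to V$ with $\omega(x_1,x_2,x_3)=-\omega(x_2,x_1,x_3)$ and (CC02) $\omega(\alpha(x_1),\alpha(x_2),\alpha(x_3))=\beta(\omega(x_1,x_2,x_3))$. A pair $(\nu,\omega)\in C^2(T,V)\times C^3(T,V)$ is a (2,3)-cocycle if for all $x_i,y_i\in T$: (CC1) $\sum_{\mathrm{cyc}(x_1,x_2,x_3)}\big(\omega(x_1,x_2,x_3)-\rho(\alpha(x_1))\nu(x_2,x_3)+\nu([x_1,x_2],\alpha(x_3))\big)=0$; (CC2) $\sum_{\mathrm{cyc}(x_1,x_2,x_3)}\big(\theta(\alpha(x_1),\alpha(y_1))\nu(x_2,x_3)+\omega([x_1,x_2],\alpha(x_3),\alpha(y_1))\big)=0$;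 (CC3) $\omega(\alpha(x_1),\alpha(x_2),[y_1,y_2])+D(\alpha(x_1),\alpha(x_2))\nu(y_1,y_2)=\nu([x_1,x_2,y_1],\alpha^2(y_2))+\nu(\alpha^2(y_1),[x_1,x_2,y_2])+\rho(\alpha^2(y_1))\omega(x_1,x_2,y_2)-\rho(\alpha^2(y_2))\omega(x_1,x_2,y_1)$; (CC4) $\omega(\alpha^2(x_1),\alpha^2(x_2),[y_1,y_2,y_3])+D(\alpha^2(x_1),\alpha^2(x_2))\omega(y_1,y_2,y_3)=\omega([x_1,x_2,y_1],\alpha^2(y_2),\alpha^2(y_3))+\omega(\alpha^2(y_1),[x_1,x_2,y_2],\alpha^2(y_3))+\omega(\alpha^2(y_1),\alpha^2(y_2),[x_1,x_2,y_3])+\theta(\alpha^2(y_2),\alpha^2(y_3))\omega(x_1,x_2,y_1)-\theta(\alpha^2(y_1),\alpha^2(y_3))\omega(x_1,x_2,y_2)+D(\alpha^2(y_1),\alpha^2(y_2))\omega(x_1,x_2,y_3)$. The space of (2,3)-cocycles is $Z^2(T,V)\times Z^3(T,V)$. A pair $(\nu,\omega)\in C^2(T,V)\times C^3(T,V)$ is a (2,3)-coboundary if there is a linear map $f:T\to V$ with (BB01) $f\circ\alpha=\beta\circ f$, (BB1) $\nu(x_1,x_2)=\rho(x_1)f(x_2)-\rho(x_2)f(x_1)-f([x_1,x_2])$, and (BB2) $\omega(x_1,x_2,x_3)=\theta(x_2,x_3)f(x_1)-\theta(x_1,x_3)f(x_2)+D(x_1,x_2)f(x_3)-f([x_1,x_2,x_3])$.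 The space of (2,3)-coboundaries is $B^2(T,V)\times B^3(T,V)$. *)

(* Defs.v *)
From HB Require Import structures.
From mathcomp Require Import all_boot all_order all_algebra.
Set Implicit Arguments. Unset Strict Implicit. Unset Printing Implicit Defensive.
Import GRing.Theory.
Local Open Scope ring_scope.

(* Vector spaces over a field K are
   modelled by lmodType K; linear, bilinear, trilinear maps by plain functions
   with linearity hypotheses; End(V)-valued maps by curried functions
   T -> V -> V (etc.) linear in every argument. *)

Section Defs.
Variable K : fieldType.

Definition lin (U W : lmodType K) (f : U -> W) : Prop :=
  forall (a : K) (x y : U), f (a *: x + y) = a *: f x + f y.

Definition bilin (U1 U2 W : lmodType K) (f : U1 -> U2 -> W) : Prop :=
  (forall x, lin (f x)) /\ (forall y, lin (fun x => f x y)).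

Definition trilin (U1 U2 U3 W : lmodType K) (f : U1 -> U2 -> U3 -> W) : Prop :=
  (forall x y, lin (f x y)) /\ (forall x z, lin (fun y => f x y z))
  /\ (forall y z, lin (fun x => f x y z)).

Variables (T V : lmodType K).

Definition is_HLYA (alpha : T -> T) (br : T -> T -> T) (tr : T -> T -> T -> T)
  : Prop :=
  ( lin alpha /\ bilin br /\ trilin tr /\
   (forall x1 x2, alpha (br x1 x2) = br (alpha x1) (alpha x2)) /\
   (forall x1 x2 x3,
        alpha (tr x1 x2 x3) = tr (alpha x1) (alpha x2) (alpha x3)) /\
   (forall x1 x2, br x1 x2 + br x2 x1 = 0) /\
   (forall x1 x2 x3, tr x1 x2 x3 + tr x2 x1 x3 = 0) /\
   (forall x1 x2 x3,
        (br (br x1 x2) (alpha x3) + tr x1 x2 x3)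
      + (br (br x2 x3) (alpha x1) + tr x2 x3 x1)
      + (br (br x3 x1) (alpha x2) + tr x3 x1 x2) = 0) /\
   (forall x1 x2 x3 y1,
        tr (br x1 x2) (alpha x3) (alpha y1)
      + tr (br x2 x3) (alpha x1) (alpha y1)
      + tr (br x3 x1) (alpha x2) (alpha y1) = 0) /\
   (forall x1 x2 y1 y2,
        tr (alpha x1) (alpha x2) (br y1 y2)
      = br (tr x1 x2 y1) (alpha (alpha y2))
      + br (alpha (alpha y1)) (tr x1 x2 y2)) /\
   (forall x1 x2 y1 y2 y3,
        tr (alpha (alpha x1)) (alpha (alpha x2)) (tr y1 y2 y3)
      = tr (tr x1 x2 y1) (alpha (alpha y2)) (alpha (alpha y3))
      + tr (alpha (alpha y1)) (tr x1 x2 y2) (alpha (alpha y3))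
      + tr (alpha (alpha y1)) (alpha (alpha y2)) (tr x1 x2 y3))).

(* Representation (rho, D, theta) of (T, alpha) on (V, beta); identities of
   endomorphisms of V are stated pointwise on v : V, composition being
   function composition. *)
Definition is_rep (alpha : T -> T) (br : T -> T -> T) (tr : T -> T -> T -> T)
  (beta : V -> V) (rho : T -> V -> V) (D theta : T -> T -> V -> V) : Prop :=
  ( lin beta /\
   (forall x, lin (rho x)) /\ (forall v, lin (fun x => rho x v)) /\
   (forall x y, lin (D x y)) /\ (forall v, bilin (fun x y => D x y v)) /\
   (forall x y, lin (theta x y)) /\ (forall v, bilin (fun x y => theta x y v)) /\
   (forall x1 v, rho (alpha x1) (beta v) = beta (rho x1 v)) /\
   (forall x1 x2 v,
        D (alpha x1) (alpha x2) (beta v) = beta (D x1 x2 v)) /\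
   (forall x1 x2 v,
        theta (alpha x1) (alpha x2) (beta v) = beta (theta x1 x2 v)) /\
   (forall x1 x2 v,
        D x1 x2 v - theta x2 x1 v + theta x1 x2 v + rho (br x1 x2) (beta v)
      - rho (alpha x1) (rho x2 v) + rho (alpha x2) (rho x1 v) = 0) /\
   (forall x1 x2 x3 v,
        D (br x1 x2) (alpha x3) v + D (br x2 x3) (alpha x1) v
      + D (br x3 x1) (alpha x2) v = 0) /\
   (forall x1 x2 y1 v,
        theta (br x1 x2) (alpha y1) (beta v)
      = theta (alpha x1) (alpha y1) (rho x2 v)
      - theta (alpha x2) (alpha y1) (rho x1 v)) /\
   (forall x1 x2 y2 v,
        D (alpha x1) (alpha x2) (rho y2 v)
      = rho (alpha (alpha y2)) (D x1 x2 v)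
      + rho (tr x1 x2 y2) (beta (beta v))) /\
   (forall x1 y1 y2 v,
        theta (alpha x1) (br y1 y2) (beta v)
      = rho (alpha (alpha y1)) (theta x1 y2 v)
      - rho (alpha (alpha y2)) (theta x1 y1 v)) /\
   (forall x1 x2 y1 y2 v,
        D (alpha (alpha x1)) (alpha (alpha x2)) (theta y1 y2 v)
      = theta (alpha (alpha y1)) (alpha (alpha y2)) (D x1 x2 v)
      + theta (tr x1 x2 y1) (alpha (alpha y2)) (beta (beta v))
      + theta (alpha (alpha y1)) (tr x1 x2 y2) (beta (beta v))) /\
   (forall x1 y1 y2 y3 v,
        theta (alpha (alpha x1)) (tr y1 y2 y3) (beta (beta v))
      = theta (alpha (alpha y2)) (alpha (alpha y3)) (theta x1 y1 v)
      - theta (alpha (alpha y1)) (alpha (alpha y3)) (theta x1 y2 v)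
      + D (alpha (alpha y1)) (alpha (alpha y2)) (theta x1 y3 v))).

Definition C2 (alpha : T -> T) (beta : V -> V) (nu : T -> T -> V) : Prop :=
  ( bilin nu /\ (forall x1 x2, nu x1 x2 = - nu x2 x1) /\
   (forall x1 x2, nu (alpha x1) (alpha x2) = beta (nu x1 x2))).

Definition C3 (alpha : T -> T) (beta : V -> V) (omega : T -> T -> T -> V)
  : Prop :=
  ( trilin omega /\ (forall x1 x2 x3, omega x1 x2 x3 = - omega x2 x1 x3) /\
   (forall x1 x2 x3,
        omega (alpha x1) (alpha x2) (alpha x3) = beta (omega x1 x2 x3))).

Definition cocycle23 (alpha : T -> T) (br : T -> T -> T)
  (tr : T -> T -> T -> T) (beta : V -> V) (rho : T -> V -> V)
  (D theta : T -> T -> V -> V) (nu : T -> T -> V) (omega : T -> T -> T -> V)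
  : Prop :=
  ( C2 alpha beta nu /\ C3 alpha beta omega /\
   (forall x1 x2 x3,
        (omega x1 x2 x3 - rho (alpha x1) (nu x2 x3) + nu (br x1 x2) (alpha x3))
      + (omega x2 x3 x1 - rho (alpha x2) (nu x3 x1) + nu (br x2 x3) (alpha x1))
      + (omega x3 x1 x2 - rho (alpha x3) (nu x1 x2) + nu (br x3 x1) (alpha x2))
      = 0) /\
   (forall x1 x2 x3 y1,
        (theta (alpha x1) (alpha y1) (nu x2 x3)
           + omega (br x1 x2) (alpha x3) (alpha y1))
      + (theta (alpha x2) (alpha y1) (nu x3 x1)
           + omega (br x2 x3) (alpha x1) (alpha y1))
      + (theta (alpha x3) (alpha y1) (nu x1 x2)
           + omega (br x3 x1) (alpha x2) (alpha y1)) = 0) /\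
   (forall x1 x2 y1 y2,
        omega (alpha x1) (alpha x2) (br y1 y2)
      + D (alpha x1) (alpha x2) (nu y1 y2)
      = nu (tr x1 x2 y1) (alpha (alpha y2))
      + nu (alpha (alpha y1)) (tr x1 x2 y2)
      + rho (alpha (alpha y1)) (omega x1 x2 y2)
      - rho (alpha (alpha y2)) (omega x1 x2 y1)) /\
   (forall x1 x2 y1 y2 y3,
        omega (alpha (alpha x1)) (alpha (alpha x2)) (tr y1 y2 y3)
      + D (alpha (alpha x1)) (alpha (alpha x2)) (omega y1 y2 y3)
      = omega (tr x1 x2 y1) (alpha (alpha y2)) (alpha (alpha y3))
      + omega (alpha (alpha y1)) (tr x1 x2 y2) (alpha (alpha y3))
      + omega (alpha (alpha y1)) (alpha (alpha y2)) (tr x1 x2 y3)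
      + theta (alpha (alpha y2)) (alpha (alpha y3)) (omega x1 x2 y1)
      - theta (alpha (alpha y1)) (alpha (alpha y3)) (omega x1 x2 y2)
      + D (alpha (alpha y1)) (alpha (alpha y2)) (omega x1 x2 y3))).

Definition coboundary23 (alpha : T -> T) (br : T -> T -> T)
  (tr : T -> T -> T -> T) (beta : V -> V) (rho : T -> V -> V)
  (D theta : T -> T -> V -> V) (nu : T -> T -> V) (omega : T -> T -> T -> V)
  : Prop :=
  ( C2 alpha beta nu /\ C3 alpha beta omega /\
   exists f : T -> V,
     ( lin f /\
      (forall x, f (alpha x) = beta (f x)) /\
      (forall x1 x2,
           nu x1 x2 = rho x1 (f x2) - rho x2 (f x1) - f (br x1 x2)) /\
      (forall x1 x2 x3,
           omega x1 x2 x3 = theta x2 x3 (f x1) - theta x1 x3 (f x2)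
                          + D x1 x2 (f x3) - f (tr x1 x2 x3)))).

End Defs.

(* Main.v *)
Require Import Defs.
From HB Require Import structures.
From mathcomp Require Import all_boot all_order all_algebra.
From mathcomp Require Import ring.
Import GRing.Theory.
Local Open Scope ring_scope.

Section Ext.
Variable V : zmodType.
Definition ext := (int * V)%type.
HB.instance Definition _ := GRing.Zmodule.on ext.
Definition emul (p q : ext) : ext := (p.1 * q.1, p.2 *~ q.1 + q.2 *~ p.1).
Definition eone : ext := (1, 0).
Lemma emulA : associative emul.
Proof. move=> [a v] [b w] [c u]; rewrite /emul /=; congr pair; first by rewrite mulrA.
by rewrite !mulrzDl -!mulrzA !(mulrC b) !(mulrC a) addrA. Qed.
Lemma emulC : commutative emul.
Proof. move=> [a v] [b w]; rewrite /emul /= mulrC addrC //. Qed.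
Lemma emul1 : left_id eone emul.
Proof. move=> [a v]; rewrite /emul /= mul1r mul0rz add0r mulr1z //. Qed.
Lemma emulD : left_distributive emul +%R.
Proof. move=> [a v] [b w] [c u]; rewrite /emul /=; congr pair; first by rewrite mulrDl.
by rewrite mulrzDl mulrzDr addrACA. Qed.
Lemma eone_neq0 : eone != 0.
Proof. by rewrite /eone xpair_eqE negb_and. Qed.
HB.instance Definition _ := GRing.Zmodule_isComNzRing.Build ext emulA emulC emul1 emulD eone_neq0.
Definition emb (v : V) : ext := (0, v).
Lemma embD x y : emb (x + y) = emb x + emb y. Proof. by rewrite /emb; congr pair; rewrite addr0. Qed.
Lemma embN x : emb (- x) = - emb x. Proof. by rewrite /emb; congr pair; rewrite oppr0. Qed.
Lemma embB x y : emb (x - y) = emb x - emb y. Proof. by rewrite embD embN. Qed.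
Lemma emb0 : emb 0 = 0. Proof. by []. Qed.
Lemma emb_inj : injective emb. Proof. by move=> x y []. Qed.
End Ext.

Lemma use (V : zmodType) (a b c d : V) : c = d -> a - b = c - d -> a = b.
Proof. by move=> ->; rewrite subrr => /eqP; rewrite subr_eq0 => /eqP. Qed.
Lemma addeq (V : zmodType) (a b c d : V) : a = b -> c = d -> a + c = b + d.
Proof. by move=> -> ->. Qed.

Arguments use {V a b c d}.
Arguments addeq {V a b c d}.
Ltac finish := apply: emb_inj; rewrite ?(embB, embD, embN, emb0); ring.

Section L.
Variables (K : fieldType) (U W : lmodType K) (g : U -> W) (hg : lin g).
Lemma linD x y : g (x + y) = g x + g y.
Proof. by move: (hg 1 x y); rewrite !scale1r. Qed.
Lemma lin0 : g 0 = 0.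
Proof. have h := linD 0 0; rewrite addr0 in h; by apply: (@addrI _ (g 0)); rewrite addr0 -h. Qed.
Lemma linN x : g (- x) = - g x.
Proof. by move: (hg (-1) x 0); rewrite lin0 !addr0 !scaleN1r. Qed.
End L.
Theorem proposition2p11 (K : closedFieldType)
  (hK2 : (2%:R : K) != 0) (hK3 : (3%:R : K) != 0)
  (T V : lmodType K) (alpha : T -> T) (br : T -> T -> T)
  (tr : T -> T -> T -> T) (beta : V -> V) (rho : T -> V -> V)
  (D theta : T -> T -> V -> V)
  (hT : is_HLYA alpha br tr)
  (hrep : is_rep alpha br tr beta rho D theta)
  (nu : T -> T -> V) (omega : T -> T -> T -> V) :
  coboundary23 alpha br tr beta rho D theta nu omega ->
  cocycle23 alpha br tr beta rho D theta nu omega.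
Proof.
move: hT => [lalpha [hbr [htr [HLY01 [HLY02 [HLY1 [HLY2 [HLY3 [HLY4 [HLY5 HLY6]]]]]]]]]].
move: hrep => [lbeta [rho1 [rho2 [D1 [D2 [th1 [th2 [HR01 [HR02 [HR03 [HR31 [HR41 [HR42 [HR51 [HR52 [HR61 HR62]]]]]]]]]]]]]]]].
move=> [C2nu [C3om [f [lf [Hfa [Hnu Hom]]]]]].
have fD := @linD _ _ _ _ lf; have f0 := @lin0 _ _ _ _ lf.
have rvD : forall x a b, rho x (a + b) = rho x a + rho x b := fun x => @linD _ _ _ _ (rho1 x).
have rvN : forall x a, rho x (- a) = - rho x a := fun x => @linN _ _ _ _ (rho1 x).
have DvD : forall x y a b, D x y (a + b) = D x y a + D x y b := fun x y => @linD _ _ _ _ (D1 x y).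
have DvN : forall x y a, D x y (- a) = - D x y a := fun x y => @linN _ _ _ _ (D1 x y).
have tvD : forall x y a b, theta x y (a + b) = theta x y a + theta x y b := fun x y => @linD _ _ _ _ (th1 x y).
have tvN : forall x y a, theta x y (- a) = - theta x y a := fun x y => @linN _ _ _ _ (th1 x y).
split; first exact: C2nu. split; first exact: C3om.
split.
  move=> x1 x2 x3; rewrite !Hnu !Hom !Hfa ?(rvD, rvN, DvD, DvN, tvD, tvN).
  have H1 := HR31 x1 x2 (f x3); have H2 := HR31 x2 x3 (f x1); have H3 := HR31 x3 x1 (f x2).
  have H4 := congr1 f (HLY3 x1 x2 x3); rewrite !fD f0 in H4.
  have := addeq H1 (addeq H2 (addeq H3 (esym H4))) => H; apply: (use H); finish.
split.
  move=> x1 x2 x3 y1; rewrite !Hnu !Hom !Hfa ?(rvD, rvN, DvD, DvN, tvD, tvN).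
  have H1 := HR42 x1 x2 y1 (f x3); have H2 := HR42 x2 x3 y1 (f x1); have H3 := HR42 x3 x1 y1 (f x2).
  have H5 := HR41 x1 x2 x3 (beta (f y1)).
  have H4 := congr1 f (HLY4 x1 x2 x3 y1); rewrite !fD f0 in H4.
  have := addeq (esym H1) (addeq (esym H2) (addeq (esym H3) (addeq (esym H4) H5))) => H; apply: (use H); finish.
split.
  move=> x1 x2 y1 y2; rewrite !Hnu !Hom !Hfa ?(rvD, rvN, DvD, DvN, tvD, tvN).
  have H1 := HR52 x2 y1 y2 (f x1); have H2 := HR52 x1 y1 y2 (f x2).
  have H3 := HR51 x1 x2 y1 (f y2); have H5 := HR51 x1 x2 y2 (f y1).
  have H4 := congr1 f (HLY5 x1 x2 y1 y2); rewrite !fD in H4.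
  have := addeq H1 (addeq (esym H2) (addeq H3 (addeq (esym H4) (esym H5)))) => H; apply: (use H); finish.
have rhoD : forall p q w, rho (p + q) w = rho p w + rho q w := fun p q w => @linD _ _ _ _ (rho2 w) p q.
have hD : forall p q w, D p q w = theta q p w - theta p q w - rho (br p q) (beta w)
    + rho (alpha p) (rho q w) - rho (alpha q) (rho p w).
  by move=> p q w; apply: (use (HR31 p q w)); finish.
have DD : forall x1 x2 y1 y2 v,
  D (alpha (alpha x1)) (alpha (alpha x2)) (D y1 y2 v)
  = D (tr x1 x2 y1) (alpha (alpha y2)) (beta (beta v))
  + D (alpha (alpha y1)) (tr x1 x2 y2) (beta (beta v))
  + D (alpha (alpha y1)) (alpha (alpha y2)) (D x1 x2 v).
  move=> x1 x2 y1 y2 v.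
  rewrite (hD y1 y2 v) (hD (tr x1 x2 y1)) (hD (alpha (alpha y1)) (tr x1 x2 y2)).
  rewrite (hD (alpha (alpha y1)) (alpha (alpha y2))).
  rewrite ?(DvD, DvN).
  rewrite (HR61 x1 x2 y2 y1 v) (HR61 x1 x2 y1 y2 v).
  rewrite (HR51 (alpha x1) (alpha x2) (br y1 y2) (beta v)).
  rewrite (HR51 (alpha x1) (alpha x2) (alpha y1) (rho y2 v)).
  rewrite (HR51 (alpha x1) (alpha x2) (alpha y2) (rho y1 v)).
  rewrite (HR51 x1 x2 y2 v) (HR51 x1 x2 y1 v) (HR02 x1 x2 v) (HLY5 x1 x2 y1 y2).
  rewrite -!HLY02 !HLY01 rhoD.
  rewrite -(HR01 y2 v) -(HR01 (alpha y2) (beta v)) -(HR01 y1 v) -(HR01 (alpha y1) (beta v)).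
  rewrite ?(rvD, rvN).
  by apply: (use (erefl (0:V))); finish.
move=> x1 x2 y1 y2 y3; rewrite !Hom !Hfa ?(rvD, rvN, DvD, DvN, tvD, tvN).
have H1 := HR62 x2 y1 y2 y3 (f x1); have H2 := HR62 x1 y1 y2 y3 (f x2).
have H3 := HR61 x1 x2 y2 y3 (f y1); have H5 := HR61 x1 x2 y1 y3 (f y2).
have H6 := DD x1 x2 y1 y2 (f y3).
have H4 := congr1 f (HLY6 x1 x2 y1 y2 y3); rewrite !fD in H4.
have := addeq H1 (addeq (esym H2) (addeq H3 (addeq (esym H4) (addeq (esym H5) H6)))) => H.
apply: (use H); finish.
Qed.
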